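(* Let $F\in\mathcal S^\sharp$ and $C>0$. There is a constant $K>0$ (depending on $C$ and $F$) such that for all $t\in[-C,0)$ and all $x\in\mathbb R$, \[ \widetilde{F_t}(x)\le K\exp\!\Bigl(\tfrac{10}{|t|}\min(x,-2)^2\Bigr). \] In particular $|F_t(x+iy)|\le K\exp\!\bigl(\tfrac{10}{|t|}\min(x,-2)^2\bigr)$ for all $x,y\in\mathbb R$.
   Context: The extended Selberg class $\mathcal S^\sharp$ is the set of functions $F$, not identically zero, such that: (i) $F(s)=\sum_{n\ge1}a_n n^{-s}$, with the series converging absolutely for $\Re s>1$; (ii) $(s-1)^mF(s)$ extends to an entire function of finite order for some integer $m\ge0$; (iii) letting $m$ be the order of the pole of $F$ at $s=1$ ($m=0$ if there is no pole), there is a function $\gamma(s)=\alpha s^m(s-1)^mQ^s\prod_{i=1}^k\Gamma(\omega_i s+\mu_i)$ with $\alpha\in\mathbb C\setminus\{0\}$, $Q>0$, an integer $k\ge1$, $\omega_i>0$ and $\mu_i\in\mathbb C$ with $\Re\mu_i\ge0$, such that the (entire) function $\xi^F(s):=\gamma(s)F(s)$ satisfies $\xi^F(s)=\overline{\xi^F(1-\bar s)}$ for all $s$. For $t<0$: $F_t(s):=\sum_{n\ge1}\exp\!\left(-\frac{|t|}{4}\log^2 n\right)a_n n^{-s}$ and $\widetilde{F_t}(x):=\sum_{n\ge1}\exp\!\left(-\frac{|t|}{4}\log^2 n\right)|a_n| n^{-x}$ for $x\in\mathbb R$. *)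

(* Defs.v *)
From Stdlib Require Import Reals Factorial List.
From Coquelicot Require Import Coquelicot.
Open Scope R_scope.

Definition cexp (z : C) : C :=
  (exp (Re z) * cos (Im z), exp (Re z) * sin (Im z)).

(** [cpow_pos b z] = b^z := exp(z log b) for a real b > 0. *)
Definition cpow_pos (b : R) (z : C) : C := cexp (z * RtoC (ln b))%C.

Definition entire (f : C -> C) : Prop :=
  forall z : C, @ex_derive C_AbsRing C_NormedModule f z.

Definition finite_order (f : C -> C) : Prop :=
  exists rho R0 : R, 0 < rho /\
    forall s : C, R0 <= Cmod s -> Cmod (f s) <= exp (Rpower (Cmod s) rho).

(** Complex Gamma function, via Euler's limit formula:
    Gamma z = lim_{n->oo} n^z n! / (z (z+1) ... (z+n)),
    valid for z not a non-positive integer. [is_Gamma z w] says this limit is w. *)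
Definition Euler_Gamma_seq (z : C) (n : nat) : C :=
  (cpow_pos (INR n) z * RtoC (INR (fact n)) /
     fold_right Cmult (RtoC 1) (map (fun j => z + RtoC (INR j)) (seq 0 (S n))))%C.

Definition is_Gamma (z w : C) : Prop :=
  filterlim (Euler_Gamma_seq z) eventually (@locally C_UniformSpace w).

Definition nonpos_integer (z : C) : Prop := exists k : nat, z = RtoC (- INR k).

(** Dirichlet series F(s) = sum_{n>=1} a_n n^{-s}; the coefficient a_n is [a n]
    for n >= 1 ([a 0] is ignored). [dirichlet_term a s n] is the (n+1)-th term. *)
Definition dirichlet_term (a : nat -> C) (s : C) (n : nat) : C :=
  (a (S n) * cpow_pos (INR (S n)) (- s))%C.

Definition is_dirichlet_sum (a : nat -> C) (s v : C) : Prop :=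
  @is_series C_AbsRing C_NormedModule (dirichlet_term a s) v.

Definition in_Selberg_ext (a : nat -> C) : Prop :=
  (forall s : C, 1 < Re s ->
     ex_series (fun n => Cmod (dirichlet_term a s n))) /\
  (exists s v : C, 1 < Re s /\ is_dirichlet_sum a s v /\ v <> RtoC 0) /\
  exists (m : nat) (G : C -> C),
    (* G is the entire finite-order extension of (s-1)^m F(s) *)
    entire G /\ finite_order G /\
    (forall s v : C, 1 < Re s -> is_dirichlet_sum a s v ->
       G s = (Cpow (s - RtoC 1) m * v)%C) /\
    (* m is the order of the pole of F at s = 1 *)
    (m = 0%nat \/ G (RtoC 1) <> RtoC 0) /\
    exists (alpha : C) (Q : R) (k : nat) (omega : nat -> R) (mu : nat -> C)
           (Xi : C -> C),
      alpha <> RtoC 0 /\ 0 < Q /\ (1 <= k)%nat /\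
      (forall i, (i < k)%nat -> 0 < omega i) /\
      (forall i, (i < k)%nat -> 0 <= Re (mu i)) /\
      entire Xi /\
      (* Xi(s) = gamma(s) F(s) with gamma(s) = alpha s^m (s-1)^m Q^s prod Gamma(omega_i s + mu_i),
         expressed through G(s) = (s-1)^m F(s), away from the poles of the Gamma factors *)
      (forall (s : C) (w : nat -> C),
         (forall i, (i < k)%nat -> ~ nonpos_integer (RtoC (omega i) * s + mu i)%C) ->
         (forall i, (i < k)%nat -> is_Gamma (RtoC (omega i) * s + mu i)%C (w i)) ->
         Xi s = (alpha * Cpow s m * cpow_pos Q s *
                 fold_right Cmult (RtoC 1) (map w (seq 0 k)) * G s)%C) /\
      (forall s : C, Xi s = Cconj (Xi (RtoC 1 - Cconj s)%C)).

Definition Ft_term (a : nat -> C) (t : R) (s : C) (n : nat) : C :=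
  (RtoC (exp (- (Rabs t / 4) * (ln (INR (S n)))^2)) * dirichlet_term a s n)%C.

Definition Ftilde_term (a : nat -> C) (t x : R) (n : nat) : R :=
  exp (- (Rabs t / 4) * (ln (INR (S n)))^2) * Cmod (a (S n)) * Rpower (INR (S n)) (- x).

Definition Ftilde (a : nat -> C) (t x : R) : R := Series (Ftilde_term a t x).

(* Main.v *)
Require Import Defs.
From Stdlib Require Import Reals Lra Psatz.
From Coquelicot Require Import Coquelicot.
Open Scope R_scope.

Lemma cmod_cexp z : Cmod (cexp z) = exp (Re z).
Proof.
  unfold cexp, Cmod; simpl.
  assert (H := sin2_cos2 (Im z)). unfold Rsqr in H.
  replace (exp (Re z) * cos (Im z) * (exp (Re z) * cos (Im z) * 1) +
     exp (Re z) * sin (Im z) * (exp (Re z) * sin (Im z) * 1)) with (exp (Re z) * exp (Re z))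
     by (transitivity (exp (Re z) * exp (Re z) * (sin (Im z) * sin (Im z) + cos (Im z) * cos (Im z))); [rewrite H; ring | ring]).
  apply sqrt_square. left; apply exp_pos.
Qed.

Lemma cmod_cpow b x y : Cmod (cpow_pos b (- (x, y))%C) = exp (- x * ln b).
Proof.
  unfold cpow_pos. rewrite cmod_cexp. f_equal. simpl. ring.
Qed.

Lemma cmod_dt a x y n : Cmod (dirichlet_term a (x, y) n) = Cmod (a (S n)) * Rpower (INR (S n)) (- x).
Proof. unfold dirichlet_term. rewrite Cmod_mult, cmod_cpow. reflexivity. Qed.

Lemma key u L x : 0 < u -> 0 <= L ->
  - (u / 4) * L ^ 2 + - x * L <= - 2 * L + 10 / u * (Rmin x (-2)) ^ 2.
Proof.
  intros Hu HL.
  assert (H10 : u * (10 / u) = 10) by (field; lra).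
  set (c := 10 / u) in *.
  assert (Hc : 0 < c) by (unfold c; apply Rdiv_lt_0_compat; lra).
  apply Rmult_le_reg_l with u; [lra|].
  set (m := Rmin x (-2)).
  assert (Hm : (x - 2) ^ 2 <= 10 * m ^ 2 \/ x >= 2).
  { unfold m, Rmin; destruct (Rle_dec x (-2)); [left; nra|].
    destruct (Rle_dec 2 x); [right; lra|left; nra]. }
  destruct Hm as [Hm|Hm].
  - assert (u * (- (u / 4) * L ^ 2 + - x * L) <= u * (- 2 * L) + (x-2)^2).
    { assert (0 <= (u*L/2 + (x-2))^2) by apply pow2_ge_0.
      assert (E: u * (- (u / 4) * L ^ 2 + - x * L) - (u * (- 2 * L) + (x-2)^2) = - (u*L/2 + (x-2))^2) by field.
      lra. }
    replace (u * (-2*L + c*m^2)) with (u*(-2*L) + 10*m^2) by (rewrite <- H10; ring). lra.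
  - replace (u * (-2*L + c*m^2)) with (u*(-2*L) + 10*m^2) by (rewrite <- H10; ring).
    assert (0 <= m^2) by apply pow2_ge_0.
    assert (0 <= u*L) by nra. assert (0 <= u*L*L) by nra. nra.
Qed.

Lemma pw a t x n : t < 0 ->
  0 <= Ftilde_term a t x n <=
  exp (10 / Rabs t * (Rmin x (-2)) ^ 2) * Cmod (dirichlet_term a (RtoC 2) n).
Proof.
  intros Ht. unfold RtoC. rewrite cmod_dt. unfold Ftilde_term, Rpower.
  assert (HL : 0 <= ln (INR (S n))).
  { rewrite <- ln_1. apply ln_le; [lra|]. rewrite S_INR. assert (0 <= INR n) by apply pos_INR. lra. }
  assert (Hu : 0 < Rabs t) by (apply Rabs_pos_lt; lra).
  assert (Ha : 0 <= Cmod (a (S n))) by apply Cmod_ge_0.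
  split.
  - apply Rmult_le_pos; [apply Rmult_le_pos; [left; apply exp_pos | exact Ha] | left; apply exp_pos].
  - replace (exp (- (Rabs t / 4) * ln (INR (S n)) ^ 2) * Cmod (a (S n)) *
             exp (- x * ln (INR (S n))))
      with (Cmod (a (S n)) * exp (- (Rabs t / 4) * ln (INR (S n)) ^ 2 + - x * ln (INR (S n))))
      by (rewrite exp_plus; ring).
    replace (exp (10 / Rabs t * Rmin x (-2) ^ 2) * (Cmod (a (S n)) * exp (- (2) * ln (INR (S n)))))
      with (Cmod (a (S n)) * exp (- (2) * ln (INR (S n)) + 10 / Rabs t * Rmin x (-2) ^ 2))
      by (rewrite exp_plus; ring).
    apply Rmult_le_compat_l; [exact Ha|].
    destruct (Rle_lt_or_eq_dec _ _ (key (Rabs t) (ln (INR (S n))) x Hu HL)) as [H|H].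
    + left; apply exp_increasing; exact H.
    + rewrite H; right; reflexivity.
Qed.

Lemma cmod_ft a t x y n : Cmod (Ft_term a t (x, y) n) = Ftilde_term a t x n.
Proof.
  unfold Ft_term. rewrite Cmod_mult, Cmod_R, cmod_dt, Rabs_pos_eq by (left; apply exp_pos).
  unfold Ftilde_term. ring.
Qed.

Theorem mainTheorem11 (a : nat -> C) (HF : in_Selberg_ext a) (Cc : R) (HC : 0 < Cc) :
  exists K : R, 0 < K /\
    forall t x : R, - Cc <= t < 0 ->
      (ex_series (Ftilde_term a t x) /\
       Ftilde a t x <= K * exp (10 / Rabs t * (Rmin x (-2))^2)) /\
      (forall (y : R), exists v : C,
         @is_series C_AbsRing C_NormedModule (Ft_term a t (x, y)) v /\
         Cmod v <= K * exp (10 / Rabs t * (Rmin x (-2))^2)).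
Proof.
  destruct HF as [Hab _].
  set (b := fun n => Cmod (dirichlet_term a (RtoC 2) n)).
  assert (Hb : ex_series b).
  { apply Hab. simpl. lra. }
  set (S := Series b).
  assert (HS : 0 <= S).
  { assert (H0 := Series_scal_l 0 b). fold S in H0.
    assert (Series (fun n => 0 * b n) <= S).
    { apply Series_le; [|exact Hb]. intros n; split; [rewrite Rmult_0_l; lra|]. unfold b. rewrite Rmult_0_l. apply Cmod_ge_0. }
    lra. }
  exists (S + 1). split; [lra|].
  intros t x [Ht1 Ht2].
  set (E := exp (10 / Rabs t * Rmin x (-2) ^ 2)).
  assert (HE : 0 < E) by apply exp_pos.
  assert (Hsc : ex_series (fun n => E * b n)).
  { exact (ex_series_scal_l E b Hb). }
  assert (Hex : ex_series (Ftilde_term a t x)).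
  {
    apply (@ex_series_le R_AbsRing R_CompleteNormedModule _ (fun n => E * b n)); [|exact Hsc].
    intros n. destruct (pw a t x n Ht2) as [H1 H2].
    rewrite Rabs_pos_eq by exact H1. exact H2. }
  assert (Hle : Series (Ftilde_term a t x) <= E * S).
  { unfold S. rewrite <- Series_scal_l. apply Series_le; [|exact Hsc].
    intros n. exact (pw a t x n Ht2). }
  split.
  - split; [exact Hex|]. unfold Ftilde. fold E. nra.
  - intros y.
    assert (Hc : ex_series (Ft_term a t (x, y))).
    { apply (@ex_series_le C_AbsRing C_CompleteNormedModule _ (Ftilde_term a t x)); [|exact Hex].
      intros n. rewrite <- (cmod_ft a t x y n). apply Rle_refl. }
    destruct Hc as [v Hv]. exists v. split; [exact Hv|].
    fold E.
    assert (Hlim : Rbar_le (Cmod v) (Series (Ftilde_term a t x))).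
    { apply (is_lim_seq_le (fun N => Cmod (sum_n (Ft_term a t (x, y)) N))
                           (sum_n (Ftilde_term a t x))).
      - intros N. eapply Rle_trans. apply (norm_sum_n_m (Ft_term a t (x,y)) 0 N).
        unfold sum_n. right. apply sum_n_m_ext. intros k. apply cmod_ft.
      - unfold is_lim_seq. eapply filterlim_comp; [exact Hv | apply (@filterlim_norm C_AbsRing C_NormedModule)].
      - apply Series_correct. exact Hex. }
    simpl in Hlim. nra.
Qed.
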